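(* Let $n$ be a positive integer. For every irrational real $\xi$, $\lambda_n(\xi) = \max_{g \mid n} \lambda(g\xi)$, and for all reals $\xi \neq \xi'$, $\mu_n(\xi,\xi') = \max_{g\mid n} \mu(g\xi, g\xi')$, where $g$ ranges over the positive divisors of $n$.
   Context: For an irrational real $\xi$ and positive integer $n$, $\lambda_n(\xi) = \limsup_{s/t \to \xi} \dfrac{\gcd(t,n)}{t^2 \left| \frac{s}{t} - \xi\right|} \in \mathbb{R}\cup\{\infty\}$, the limsup being over rationals $s/t$ ($t>0$) tending to $\xi$; and $\lambda = \lambda_1$ is the classical Lagrange approximability. For reals $\xi\ne\xi'$, $\mu_n(\xi,\xi') = \sup_{(s,t)\in\mathbb{Z}^2\setminus\{0\}} \dfrac{\gcd(t,n)\,|\xi-\xi'|}{|s-t\xi|\,|s-t\xi'|} \in \mathbb{R}\cup\{\infty\}$ (with $\gcd(0,n)=n$), and $\mu=\mu_1$ is the classical Markoff approximability. *)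

(* Defs.v *)
From HB Require Import structures.
From mathcomp Require Import all_boot all_order all_algebra.
From mathcomp Require Import all_classical all_reals ereal.
Set Implicit Arguments. Unset Strict Implicit. Unset Printing Implicit Defensive.
Import Order.TTheory GRing.Theory Num.Theory.
Local Open Scope ring_scope.
Local Open Scope classical_set_scope.

Section Defs.
Variable R : realType.

Definition gcdzn (t : int) (n : nat) : nat := gcdn `|t|%N n.

(* lambda_n(xi) = limsup_{s/t -> xi} gcd(t,n) / (t^2 |s/t - xi|), the limsup
   over rationals s/t (lowest terms, t > 0) in punctured neighbourhoods of xi:
   inf over e > 0 of the sup over 0 < |s/t - xi| < e. *)
Definition lambda_n (n : nat) (xi : R) : \bar R :=
  ereal_inf [set ereal_sup
    [set x : \bar R | exists s t : int,
       [/\ 0 < t, coprimez s t,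
           0 < `|s%:~R / t%:~R - xi| < e &
           x = ((gcdzn t n)%:R / (t%:~R ^+ 2 * `|s%:~R / t%:~R - xi|))%:E]]
    | e in [set e : R | 0 < e]].

Definition lambda (xi : R) : \bar R := lambda_n 1 xi.

Definition mu_term (n : nat) (xi xi' : R) (s t : int) : \bar R :=
  let d := `|s%:~R - t%:~R * xi| * `|s%:~R - t%:~R * xi'| in
  if d == 0 then +oo%E else ((gcdzn t n)%:R * `|xi - xi'| / d)%:E.

Definition mu_n (n : nat) (xi xi' : R) : \bar R :=
  ereal_sup [set x : \bar R | exists s t : int,
               (s, t) != (0, 0) /\ x = mu_term n xi xi' s t].

Definition mu (xi xi' : R) : \bar R := mu_n 1 xi xi'.

End Defs.

(* Main.v *)
Require Import Defs.
From HB Require Import structures.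
From mathcomp Require Import all_boot all_order all_algebra.
From mathcomp Require Import all_classical all_reals ereal.
From mathcomp Require Import ring lra zify.
Import Order.TTheory GRing.Theory Num.Theory.
Local Open Scope ring_scope.
Local Open Scope classical_set_scope.
Section MuPart.
Variable R : realType.
Local Open Scope ereal_scope.

Lemma key (g : nat) (s t' : int) (xi : R) :
  (s%:~R - t'%:~R * (g%:R * xi) = s%:~R - (g%:Z * t')%:~R * xi)%R.
Proof. rewrite intrM. ring. Qed.

Lemma key2 (g : nat) (xi xi' : R) :
  (`|g%:R * xi - g%:R * xi'| = g%:R * `|xi - xi'|)%R.
Proof. by rewrite -mulrBr normrM normr_nat. Qed.

Lemma mu_term_scale n (g : nat) (xi xi' : R) s t' :
  mu_term n xi xi' s (g%:Z * t') =
   let d := (`|s%:~R - t'%:~R * (g%:R * xi)| * `|s%:~R - t'%:~R * (g%:R * xi')|)%R in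
   if d == 0%R then +oo else ((gcdzn (g%:Z * t') n)%:R * `|xi - xi'| / d)%:E.
Proof. by rewrite /mu_term /= !key. Qed.

Lemma mu_term_scale1 (g : nat) (xi xi' : R) s t' :
  mu_term 1 (g%:R * xi) (g%:R * xi') s t' =
   let d := (`|s%:~R - t'%:~R * (g%:R * xi)| * `|s%:~R - t'%:~R * (g%:R * xi')|)%R in
   if d == 0%R then +oo else (g%:R * `|xi - xi'| / d)%:E.
Proof. by rewrite /mu_term /= key2 /gcdzn gcdn1 mul1r. Qed.

Lemma mu_le n (g : nat) (xi xi' : R) s t' : (0 < n)%N -> (g %| n)%N ->
  mu_term 1 (g%:R * xi) (g%:R * xi') s t' <= mu_term n xi xi' s (g%:Z * t').
Proof.
move=> n0 gn; rewrite mu_term_scale mu_term_scale1 /=.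
case: ifP => // d0; rewrite lee_fin ler_wpM2r ?invr_ge0 ?mulr_ge0 // ?ler_wpM2r //.
rewrite ler_nat; apply: dvdn_leq; first by rewrite gcdn_gt0 n0 orbT.
by rewrite dvdn_gcd gn andbT /= abszM /= dvdn_mulr.
Qed.
End MuPart.
Section MuMain.
Variable R : realType.
Local Open Scope ereal_scope.

Lemma mu_decomp (t : int) {n} : (0 < n)%N ->
  exists t', t = ((gcdzn t n)%:Z * t')%R.
Proof.
move=> n0; have : ((gcdzn t n)%:Z %| t)%Z.
  by rewrite /dvdz /= /gcdzn; apply: dvdn_gcdl.
move=> /dvdzP [t' E]; exists t'; rewrite mulrC; exact: E.
Qed.

Lemma mu_part n (xi xi' : R) : (0 < n)%N ->
  mu_n n xi xi' =
     \big[Order.max/-oo%E]_(g <- divisors n) mu (g%:R * xi) (g%:R * xi').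
Proof.
move=> n0; apply/eqP; rewrite eq_le; apply/andP; split.
- apply: ge_ereal_sup => x [s [t [st0 ->]]].
  have [t' tE] := mu_decomp t n0.
  set g := gcdzn t n in tE.
  have gd : g \in divisors n by rewrite -dvdn_divisors //; apply: dvdn_gcdr.
  apply: (bigmax_sup_seq _ _ _ _ _ gd erefl); rewrite /=.
  have -> : mu_term n xi xi' s t = mu_term 1 (g%:R * xi) (g%:R * xi') s t'.
    by rewrite {1}tE mu_term_scale mu_term_scale1 /= -tE.
  apply: ereal_sup_ubound; exists s, t'; split => //.
  apply: contra st0; rewrite !xpair_eqE => /andP[-> /eqP t0]; rewrite tE t0 mulr0 eqxx.
  done.
- rewrite big_seq; apply: bigmax_le; first exact: leNye.
  move=> g; rewrite -dvdn_divisors // => gn.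
  apply: ge_ereal_sup => x [s [t' [st0 ->]]].
  apply: le_trans (@mu_le R n g xi xi' s t' n0 gn) _.
  apply: ereal_sup_ubound; exists s, (g%:Z * t')%R; split => //.
  apply: contra st0; rewrite !xpair_eqE => /andP[-> /=]; rewrite mulf_eq0 => /orP[|//].
  move=> /eqP[g0]; move: gn; rewrite g0 dvd0n => /eqP n00; move: n0; rewrite n00.
  done.
Qed.
End MuMain.
Section LamPart.
Variable R : realType.
Local Open Scope ereal_scope.

Definition S n (xi e : R) := [set x : \bar R | exists s t : int,
       [/\ (0 < t)%R, coprimez s t,
           (0 < `|s%:~R / t%:~R - xi| < e)%R &
           x = ((gcdzn t n)%:R / (t%:~R ^+ 2 * `|s%:~R / t%:~R - xi|))%:E]].

Lemma lambda_nE n xi : lambda_n n xi =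
  ereal_inf [set ereal_sup (S n xi e) | e in [set e : R | (0 < e)%R]].
Proof. by []. Qed.

Lemma S_mono n xi (e e' : R) : (e <= e')%R -> ereal_sup (S n xi e) <= ereal_sup (S n xi e').
Proof.
move=> ee; apply: ereal_sup_le => x [s [t [t0 co /andP[h1 h2] ->]]].
exists s, t; split => //; rewrite h1 /=; exact: lt_le_trans h2 ee.
Qed.

Lemma exists_common (P : nat -> R -> Prop) (r : seq nat) :
  (forall g e e', (0 < e')%R -> (e' <= e)%R -> P g e -> P g e') ->
  (forall g, g \in r -> exists2 e, (0 < e)%R & P g e) ->
  exists2 e, (0 < e)%R & forall g, g \in r -> P g e.
Proof.
move=> Pm; elim: r => [|g r IH] H; first by exists 1%R => //.
have [e1 e10 P1] := H g (mem_head _ _).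
have [e2 e20 P2] : exists2 e, (0 < e)%R & forall g, g \in r -> P g e.
  by apply: IH => h hr; apply: H; rewrite inE hr orbT.
exists (Num.min e1 e2); first by rewrite lt_min e10 e20.
move=> h; rewrite inE => /orP[/eqP->|hr].
  by apply: Pm P1; rewrite ?lt_min ?e10 ?e20 // ge_min lexx.
by apply: Pm (P2 _ hr); rewrite ?lt_min ?e10 ?e20 // ge_min lexx orbT.
Qed.

Lemma ereal_le_of_gt (x M : \bar R) : (forall y, M < y -> x <= y) -> x <= M.
Proof.
case: M => [r| |] H; last first.
- case: x H => [r0| |] H //.
  + have := H (EFin (r0 - 1)%R) (ltNyr _); rewrite lee_fin => h; exfalso; lra.
  + by have := H 0 (ltNyr _).
- exact: leey.
- apply/lee_addgt0Pr => e e0; apply: H; rewrite -EFinD lte_fin; lra.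
Qed.

End LamPart.
Arguments S {R}.
Section LamElem.
Variable R : realType.
Local Open Scope ereal_scope.

Lemma lam_elem n (xi e : R) x : (0 < n)%N -> S n xi e x ->
  exists2 g, g \in divisors n & S 1 (g%:R * xi) (g%:R * e) x.
Proof.
move=> n0 [s [t [t0 co /andP[h1 h2] ->]]].
have [t' tE] := mu_decomp t n0.
set g := gcdzn t n in tE *.
have g0 : (0 < g)%N by rewrite /g /gcdzn gcdn_gt0 n0 orbT.
have gR : (0 < g%:R :> R)%R by rewrite ltr0n.
exists g; first by rewrite -dvdn_divisors //; apply: dvdn_gcdr.
have t'0 : (0 < t')%R.
  by move: t0; rewrite tE pmulr_rgt0 // ltz_nat.
have tR : (t%:~R = g%:R * t'%:~R :> R)%R by rewrite tE intrM.
have t'R : (0 < t'%:~R :> R)%R by rewrite ltr0z.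
have E : (s%:~R / t'%:~R - g%:R * xi = g%:R * (s%:~R / t%:~R - xi) :> R)%R.
  rewrite tR; field; apply/andP; split; apply: lt0r_neq0 => //.
have EA : (`|s%:~R / t'%:~R - g%:R * xi| = g%:R * `|s%:~R / t%:~R - xi| :> R)%R.
  by rewrite E normrM gtr0_norm.
exists s, t'; split => //.
- by apply: coprimez_dvdr co; rewrite tE abszM dvdn_mull.
- by rewrite EA pmulr_rgt0 // h1 /= ltr_pM2l.
- congr EFin; rewrite EA /gcdzn gcdn1 tR -/g.
  by field; rewrite !lt0r_neq0 // -tR.
Qed.
End LamElem.
Section LamGe.
Variable R : realType.
Local Open Scope ereal_scope.

Lemma lam_ge n (g : nat) (xi e : R) : (0 < n)%N -> (g %| n)%N ->
  ereal_sup (S 1 (g%:R * xi) (g%:R * e)) <= ereal_sup (S n xi e).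
Proof.
move=> n0 gn.
have g0 : (0 < g)%N by apply: contraTT n0; rewrite -eqn0Ngt => /eqP g0; move: gn; rewrite g0 dvd0n => /eqP ->.
have gR : (0 < g%:R :> R)%R by rewrite ltr0n.
apply: ge_ereal_sup => x [s [t' [t'0 _ /andP[h1 h2] ->]]].
set T : int := (g%:Z * t')%R.
have T0 : (0 < T)%R by rewrite /T pmulr_rgt0 // ltz_nat.
set dn := gcdn `|s|%N `|T|%N.
have dn0 : (0 < dn)%N by rewrite /dn gcdn_gt0 !absz_gt0 (lt0r_neq0 T0) orbT.
have [a sE] : exists a, s = (a * dn%:Z)%R.
  by apply/dvdzP; rewrite /dvdz /=; apply: dvdn_gcdl.
have [b TE] : exists b, T = (b * dn%:Z)%R.
  by apply/dvdzP; rewrite /dvdz /=; apply: dvdn_gcdr.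
have b0 : (0 < b)%R by move: T0; rewrite TE pmulr_lgt0 // ltz_nat.
have co : coprimez a b.
  have : (gcdz a b * `|dn%:Z|%:Z = gcdz s T)%R by rewrite mulz_gcdl -sE -TE.
  rewrite /coprimez /= /gcdz -/dn -[X in _ = X]mul1r => /mulIf.
  by rewrite -lt0n dn0 => /(_ isT) ->.
have gle : (g <= gcdn `|b|%N n * dn * dn)%N.
  have h : (g %| gcdn `|b|%N n * dn)%N.
    rewrite muln_gcdl dvdn_gcd; apply/andP; split; last exact: dvdn_mulr.
    have -> : (`|b|%N * dn = `|T|%N)%N by rewrite TE abszM.
    by rewrite /T abszM /=; apply: dvdn_mulr.
  apply: leq_trans (dvdn_leq _ h) _.
    by rewrite muln_gt0 dn0 gcdn_gt0 n0 orbT.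
  by rewrite leq_pmulr.
have TR : (T%:~R = g%:R * t'%:~R :> R)%R by rewrite /T intrM.
have t'R : (0 < t'%:~R :> R)%R by rewrite ltr0z.
have bR : (0 < b%:~R :> R)%R by rewrite ltr0z.
have dR : (0 < dn%:R :> R)%R by rewrite ltr0n.
have TbR : (T%:~R = b%:~R * dn%:R :> R)%R by rewrite TE intrM.
have sR : (s%:~R = a%:~R * dn%:R :> R)%R by rewrite sE intrM.
have abE : (a%:~R / b%:~R = s%:~R / T%:~R :> R)%R.
  by rewrite sR TbR; field; rewrite !lt0r_neq0.
have E : (s%:~R / t'%:~R - g%:R * xi = g%:R * (a%:~R / b%:~R - xi) :> R)%R.
  by rewrite abE TR; field; rewrite !lt0r_neq0.
have EA : (`|s%:~R / t'%:~R - g%:R * xi| = g%:R * `|a%:~R / b%:~R - xi| :> R)%R.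
  by rewrite E normrM gtr0_norm.
have D0 : (0 < `|a%:~R / b%:~R - xi| :> R)%R by move: h1; rewrite EA pmulr_rgt0.
apply: le_ereal_sup_tmp; eexists.
  exists a, b; split => //; rewrite D0 /=.
  by move: h2; rewrite EA ltr_pM2l.
rewrite lee_fin EA /gcdzn gcdn1.
set G := gcdn `|b|%N n.
set D := `|a%:~R / b%:~R - xi|%R.
have t'E : (t'%:~R = b%:~R * dn%:R / g%:R :> R)%R.
  by rewrite -TbR TR; field; rewrite lt0r_neq0.
rewrite t'E.
have -> : (1%:R / ((b%:~R * dn%:R / g%:R) ^+ 2 * (g%:R * D)) =
   g%:R * (1 / (b%:~R ^+ 2 * D * dn%:R ^+2)) :> R)%R.
  by field; rewrite !lt0r_neq0.
have -> : (G%:R / (b%:~R ^+ 2 * D) = (G * dn * dn)%:R * (1 / (b%:~R ^+ 2 * D * dn%:R ^+2)) :> R)%R.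
  by rewrite !natrM; field; rewrite !lt0r_neq0.
apply: ler_wpM2r; last by rewrite ler_nat.
by rewrite divr_ge0 // !mulr_ge0 // ?exprn_ge0 // ltW.
Qed.
End LamGe.
Section LamMain.
Variable R : realType.
Local Open Scope ereal_scope.

Lemma lam_part n (xi : R) : (0 < n)%N ->
  lambda_n n xi = \big[Order.max/-oo%E]_(g <- divisors n) lambda (g%:R * xi).
Proof.
move=> n0; apply/eqP; rewrite eq_le; apply/andP; split; last first.
- rewrite big_seq; apply: bigmax_le; first exact: leNye.
  move=> g; rewrite -dvdn_divisors // => gn.
  have g0 : (0 < g)%N by apply: contraTT n0; rewrite -eqn0Ngt => /eqP g0; move: gn; rewrite g0 dvd0n => /eqP ->.
  rewrite /lambda !lambda_nE; apply: le_ereal_inf_tmp => _ [e e0 <-].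
  apply: le_trans _ (@lam_ge R n g xi e n0 gn).
  apply: ereal_inf_lbound; exists (g%:R * e)%R => //.
  by rewrite /= mulr_gt0 // ltr0n.
- apply: ereal_le_of_gt => y My.
  have Hg : forall g, g \in divisors n -> exists2 e, (0 < e)%R & ereal_sup (S 1 (g%:R * xi) (g%:R * e)) < y.
    move=> g gd.
    have g0 : (0 < g%:R :> R)%R.
      rewrite ltr0n; move: gd; rewrite -dvdn_divisors // => gn.
      by apply: contraTT n0; rewrite -eqn0Ngt => /eqP g0; move: gn; rewrite g0 dvd0n => /eqP ->.
    have : lambda (g%:R * xi) < y.
      by apply: le_lt_trans My; apply: (bigmax_sup_seq _ _ _ _ _ gd erefl).
    rewrite /lambda lambda_nE => /ereal_inf_lt [_ [e e0 <-]] lt.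
    exists (e / g%:R)%R; first by rewrite divr_gt0.
    by rewrite [(_ * (e / _))%R]mulrC divfK ?lt0r_neq0.
  have Pm : forall g (e1 e2 : R), (0 < e2)%R -> (e2 <= e1)%R ->
      ereal_sup (S 1 (g%:R * xi) (g%:R * e1)) < y -> ereal_sup (S 1 (g%:R * xi) (g%:R * e2)) < y.
    move=> g e1 e2 e20 le P1; apply: le_lt_trans P1; apply: S_mono.
    by apply: ler_wpM2l.
  have [e e0 He] := @exists_common R (fun g e => ereal_sup (S 1 (g%:R * xi) (g%:R * e)) < y) _ Pm Hg.
  rewrite lambda_nE; apply: ge_ereal_inf; exists (ereal_sup (S n xi e)); first by exists e.
  apply: ge_ereal_sup => x Sx0; have [g gd Sx] := @lam_elem R n xi e x n0 Sx0.
  apply: ltW; apply: le_lt_trans (He _ gd).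
  exact: ereal_sup_ubound.
Qed.
End LamMain.

Theorem proposition3p1 (R : realType) (n : nat) (hn : (0 < n)%N) :
  (forall xi : R, irrational xi ->
     lambda_n n xi =
     \big[Order.max/-oo%E]_(g <- divisors n) lambda (g%:R * xi)) /\
  (forall xi xi' : R, xi != xi' ->
     mu_n n xi xi' =
     \big[Order.max/-oo%E]_(g <- divisors n) mu (g%:R * xi) (g%:R * xi')).
Proof.
split => [xi _ | xi xi' _]; [exact: lam_part | exact: mu_part].
Qed.
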